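(* Let $K>2$, let $n_1=1$, let $n_2>1$ be an integer, and let $n_3,\dots,n_K$ be positive integers. Let $\tau$ be the time of the first emptying event and $p$ the type emptied at time $\tau$. Then for every $t$ with $\Pr[\tau=t]>0$, \[ \Pr[p=1\mid \tau=t]\ \ge\ \Pr[p=2\mid \tau=t]. \]
   Context: Initial stocks $\vec n^{(0)}=(n_1,\dots,n_K)$ of $K$ goodie types evolve as follows: at each step $t=1,2,\dots$, as long as at least two coordinates of $\vec n^{(t-1)}$ are nonzero, an index $i$ is chosen uniformly at random (independently of the past) among the indices with $n_i^{(t-1)}>0$, and $\vec n^{(t)}=\vec n^{(t-1)}-\vec e_i$ ($\vec e_i$ the $i$-th standard unit vector). The time of the first emptying event is $\tau=\min\{t : \exists i \text{ with } n_i^{(t)}=0 \text{ and } n_i^{(0)}>0\}$; exactly one type is emptied at that step, and $p$ denotes that type. *)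

(* Defs.v *)
From mathcomp Require Import all_boot all_order all_algebra.
Set Implicit Arguments. Unset Strict Implicit. Unset Printing Implicit Defensive.
Import Order.TTheory GRing.Theory Num.Theory.
Local Open Scope ring_scope.

Definition dec {K : nat} (n : 'I_K -> nat) (j : 'I_K) : 'I_K -> nat :=
  fun k => if k == j then (n k).-1 else n k.

Definition supp {K : nat} (n : 'I_K -> nat) : {pred 'I_K} := [pred k | (0 < n k)%N].

(* first_empty t n i = Pr[tau = t /\ p = i] for the process started at stock
   vector n (tau counts steps from this start; the types that can be emptied
   are those with positive stock in n).  At each step, as long as at least two
   coordinates are nonzero, an index j with n j > 0 is picked uniformly; if
   n j = 1 this is the first emptying event (with p = j), otherwise the process
   continues from dec n j (whose support is unchanged). *)
Fixpoint first_empty {K : nat} (t : nat) (n : 'I_K -> nat) (i : 'I_K) : rat :=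
  match t with
  | 0%N => 0
  | s.+1 =>
      if (2 <= #|supp n|)%N then
        \sum_(j in supp n)
          #|supp n|%:R^-1 *
          (if n j == 1%N then (if (s == 0%N) && (j == i) then 1 else 0)
           else first_empty s (dec n j) i)
      else 0
  end.

Definition prob_tau {K : nat} (t : nat) (n : 'I_K -> nat) : rat :=
  \sum_(i : 'I_K) first_empty t n i.

Definition cond_p {K : nat} (t : nat) (n : 'I_K -> nat) (i : 'I_K) : rat :=
  first_empty t n i / prob_tau t n.

(* Main.v *)
Require Import Defs.
From mathcomp Require Import all_boot all_order all_fingroup all_algebra.
From mathcomp Require Import zify.
Set Implicit Arguments. Unset Strict Implicit. Unset Printing Implicit Defensive.
Import Order.TTheory GRing.Theory Num.Theory.
Local Open Scope ring_scope.

Lemma eq_first_empty K t (n n' : 'I_K -> nat) i :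
  n =1 n' -> first_empty t n i = first_empty t n' i.
Proof.
elim: t n n' i => [|s IH] n n' i E //=.
have Es : supp n =i supp n' by move=> k; rewrite !inE E.
rewrite (eq_card Es).
case: ifP => // _.
rewrite (eq_bigl _ _ Es); apply: eq_bigr => j _.
rewrite E; case: ifP => // _; congr (_ * _); apply: IH => k.
by rewrite /dec E.
Qed.

Lemma perm_first_empty K t (n : 'I_K -> nat) (p : {perm 'I_K}) i :
  first_empty t (fun k => n (p k)) i = first_empty t n (p i).
Proof.
elim: t n i => [|s IH] n i //=.
have Ec : #|supp (fun k => n (p k))| = #|supp n|.
  rewrite -!sum1_card [RHS](reindex_inj (@perm_inj _ p)) /=.
  by apply: eq_bigl => k; rewrite !inE.
rewrite Ec; case: ifP => // _.
rewrite [RHS](reindex_inj (@perm_inj _ p)) /=.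
apply: eq_big => [k|j _]; first by rewrite !inE.
case: ifP => // _.
  by rewrite (inj_eq (@perm_inj _ p)).
congr (_ * _).
rewrite -IH; apply: eq_first_empty => k.
by rewrite /dec (inj_eq (@perm_inj _ p)).
Qed.

Lemma main_ineq K t (n : 'I_K -> nat) a b :
  a != b -> (0 < n a)%N -> (n a <= n b)%N ->
  first_empty t n b <= first_empty t n a.
Proof.
elim: t n => [|s IH] n ab na nab //=.
case: ifP => // _.
set c := #|supp n|%:R^-1.
have c0 : 0 <= c by rewrite invr_ge0 ler0n.
have ba : (b == a) = false by apply/negbTE; rewrite eq_sym.
have gen : forall j, j != a -> j != b ->
  c * (if n j == 1%N then (if (s == 0%N) && (j == b) then 1 else 0)
       else first_empty s (dec n j) b)
  <= c * (if n j == 1%N then (if (s == 0%N) && (j == a) then 1 else 0)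
       else first_empty s (dec n j) a).
  move=> j ja jb; rewrite (negbTE ja) (negbTE jb) !andbF.
  case: ifP => // _; apply: ler_wpM2l => //; apply: IH => //;
  by rewrite /dec ![_ == j]eq_sym (negbTE ja) ?(negbTE jb).
have [lt|eq] := ltnP (n a) (n b).
- apply: ler_sum => j _.
  have [->|ja] := eqVneq j a.
    rewrite ?(negbTE ab) ?eqxx ?andbF ?andbT; apply: ler_wpM2l => //.
    case: ifP => [_|na1]; first by case: (s == 0%N).
    apply: IH => //; rewrite /dec ?eqxx ?(negbTE ab) ?ba; move/negbT: na1; lia.
  have [->|jb] := eqVneq j b; last by move: (gen j ja jb); rewrite (negbTE ja) (negbTE jb).
  rewrite ?ba ?eqxx ?andbF; have -> : (n b == 1%N) = false by lia.
  apply: ler_wpM2l => //; apply: IH => //; rewrite /dec ?eqxx ?(negbTE ab) ?ba; lia.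
- have eab : n a = n b by apply/eqP; rewrite eqn_leq nab eq.
  have ina : a \in supp n by rewrite inE.
  have inb : b \in supp n by rewrite inE -eab.
  rewrite (bigD1 a ina) [X in _ <= X](bigD1 a ina) /=.
  have inb' : (b \in supp n) && (b != a) by rewrite inb eq_sym ab.
  rewrite (bigD1 b inb') [X in _ <= _ + X](bigD1 b inb') /= !addrA.
  apply: lerD.
    rewrite -!mulrDr eqxx (negbTE ab) ba -eab.
    case: ifP => _.
      by rewrite ?eqxx ?andbT ?andbF; case: (s == 0%N); rewrite ?addr0 ?add0r.
    have E : forall i, first_empty s (dec n a) i
                       = first_empty s (dec n b) (tperm a b i).
      move=> i; rewrite -perm_first_empty; apply: eq_first_empty => k.
      rewrite /dec.
      have [->|ka] := eqVneq k a; first by rewrite tpermL ?eqxx ?ba eab.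
      have [->|kb] := eqVneq k b; first by rewrite tpermR ?eqxx ?(negbTE ab) ?ba eab.
      by rewrite tpermD ?(negbTE kb) // eq_sym.
    by rewrite !E tpermL tpermR addrC.
  apply: ler_sum => j /andP [/andP [_ ja] jb]; by move: (gen j ja jb).
Qed.

Theorem lemma11 (K : nat) (hK : (2 < K)%N) (n : 'I_K -> nat) (i1 i2 : 'I_K)
  (hi1 : val i1 = 0%N) (hi2 : val i2 = 1%N)
  (hn1 : n i1 = 1%N) (hn2 : (1 < n i2)%N)
  (hpos : forall k : 'I_K, (2 <= val k)%N -> (0 < n k)%N)
  (t : nat) (ht : 0 < prob_tau t n) :
  cond_p t n i2 <= cond_p t n i1.
Proof.
rewrite /cond_p; apply: ler_wpM2r; first by rewrite invr_ge0 ltW.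
apply: main_ineq; last by rewrite hn1; lia.
  by apply/eqP => /(congr1 val); rewrite hi1 hi2.
by rewrite hn1.
Qed.
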